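(* Let $k$ be a field of characteristic $0$ or greater than $d$, $d\ge3$, and $(V,\Theta)$ a regular $d$-linear space over $k$ with center $\mathrm{Cent}_k(\Theta)$ and Lie algebra $\mathcal{L}_\Theta$. Let $\psi\in\mathrm{Cent}_k(\Theta)$. Then $[f,g]_\psi:=f\psi g-g\psi f$ defines a Lie algebra structure on the vector space $\mathcal{L}_\Theta$ (in particular $[f,g]_\psi\in\mathcal{L}_\Theta$ for all $f,g\in\mathcal{L}_\Theta$).
   Context: $(V,\Theta)$: $V$ finite-dimensional $k$-space, $\Theta:V^d\to k$ symmetric $d$-linear, regular meaning $\Theta(w,u_2,\dots,u_d)=0\ \forall u_i\Rightarrow w=0$. $\mathrm{Cent}_k(\Theta)=\{f\in\mathrm{End}_k(V):\Theta(fu_1,u_2,\dots,u_d)=\Theta(u_1,fu_2,\dots,u_d)\ \forall u_i\}$. $\mathcal{L}_\Theta=\{L\in\mathfrak{gl}(V):\sum_{i=1}^d\Theta(u_1,\dots,L(u_i),\dots,u_d)=0\ \forall u_i\}$. *)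

(* Defs.v *)
From HB Require Import structures.
From mathcomp Require Import all_boot all_order all_algebra fingroup perm.
Set Implicit Arguments. Unset Strict Implicit. Unset Printing Implicit Defensive.
Import Order.TTheory GRing.Theory.
Local Open Scope ring_scope.

Section DLinear.
Variables (k : fieldType) (V : vectType k) (d : nat).

Definition upd (u : {ffun 'I_d -> V}) (i : 'I_d) (x : V) : {ffun 'I_d -> V} :=
  [ffun j => if j == i then x else u j].

Definition dlinear_form (Th : {ffun 'I_d -> V} -> k) : Prop :=
  forall (u : {ffun 'I_d -> V}) (i : 'I_d) (a : k) (x y : V),
    Th (upd u i (a *: x + y)) = a * Th (upd u i x) + Th (upd u i y).

Definition symmetric_dform (Th : {ffun 'I_d -> V} -> k) : Prop :=
  forall (s : 'S_d) (u : {ffun 'I_d -> V}), Th [ffun j => u (s j)] = Th u.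

Definition regular_dform (Th : {ffun 'I_d -> V} -> k) : Prop :=
  forall (i0 : 'I_d), val i0 = 0%N ->
  forall w : V, (forall u : {ffun 'I_d -> V}, Th (upd u i0 w) = 0) -> w = 0.

Definition in_Cent (Th : {ffun 'I_d -> V} -> k) (f : 'End(V)) : Prop :=
  forall (i0 i1 : 'I_d), val i0 = 0%N -> val i1 = 1%N ->
  forall u : {ffun 'I_d -> V},
    Th (upd u i0 (f (u i0))) = Th (upd u i1 (f (u i1))).

Definition in_LTheta (Th : {ffun 'I_d -> V} -> k) (L : 'End(V)) : Prop :=
  forall u : {ffun 'I_d -> V}, \sum_(i < d) Th (upd u i (L (u i))) = 0.

End DLinear.

Definition psi_bracket (k : fieldType) (V : vectType k) (psi f g : 'End(V)) : 'End(V) :=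
  (f \o psi \o g)%VF - (g \o psi \o f)%VF.

Definition char_zero_or_gt (k : fieldType) (d : nat) : Prop :=
  forall p : nat, p \in [pchar k] -> (d < p)%N.

(* Main.v *)
Require Import Defs.
From HB Require Import structures.
From mathcomp Require Import all_boot all_order all_algebra fingroup perm.
Import GRing.Theory.
Local Open Scope ring_scope.

Lemma zJ (Z : zmodType) (A B C D E F : Z) :
  (A - B) - (C - D) + ((C - E) - (F - B)) + ((F - D) - (A - E)) = 0.
Proof.
rewrite !opprB !addrA.
rewrite (addrAC _ C) subrK.
rewrite (ACl ((1*10)*(2*7)*(3*8)*(4*6)*(5*9))%AC) /=.
by rewrite subrr addNr subrr addNr addNr !addr0.
Qed.

Set Implicit Arguments.
Section Aux.
Variables (k : fieldType) (V : vectType k) (d : nat).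
Implicit Types (u : {ffun 'I_d -> V}) (i j : 'I_d).

Lemma upd_eq u i x : upd u i x i = x.
Proof. by rewrite ffunE eqxx. Qed.

Lemma upd_neq u i j x : j != i -> upd u i x j = u j.
Proof. by move=> h; rewrite ffunE (negbTE h). Qed.

Lemma upd_upd u i x y : upd (upd u i x) i y = upd u i y.
Proof. by apply/ffunP => j; rewrite !ffunE; case: (j == i). Qed.

Lemma upd_comm u i j x y : i != j ->
  upd (upd u i x) j y = upd (upd u j y) i x.
Proof.
move=> h; apply/ffunP => l; rewrite !ffunE.
case: (eqVneq l j) => [e|//]; case: (eqVneq l i) => [e'|//].
by move: h; rewrite -e -e' eqxx.
Qed.

Lemma perm_ex (i0 i1 i j : 'I_d) : i0 != i1 -> i != j ->
  exists s : 'S_d, s i0 = i /\ s i1 = j.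
Proof.
move=> h01 hij.
pose s1 := tperm i i0.
pose t := tperm i1 (s1 j).
exists (t * s1)%g; rewrite !permM; split.
  have hne : s1 j != i0.
    apply/eqP => e.
    move: (congr1 s1 e); rewrite /s1 tpermK tpermR => e'; by move: hij; rewrite e' eqxx.
  rewrite /t (@tpermD _ i1); first by rewrite /s1 tpermR.
    first [done | by rewrite eq_sym].
  first [done | by rewrite eq_sym].
by rewrite /t tpermL /s1 tpermK.
Qed.

Variables (Th : {ffun 'I_d -> V} -> k) (psi : 'End(V)).
Hypotheses (Hlin : dlinear_form Th) (HS : symmetric_dform Th)
  (HC : in_Cent Th psi) (hd : (1 < d)%N).

Lemma cent_move i j u : i != j ->
  Th (upd u i (psi (u i))) = Th (upd u j (psi (u j))).
Proof.
move=> hij.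
have h0 : (0 < d)%N by apply: ltn_trans hd.
pose i0 := Ordinal h0; pose i1 := Ordinal hd.
have [s [si0 si1]] := @perm_ex i0 i1 i j isT hij.
pose u' := [ffun l => u (s l)].
have := @HC i0 i1 erefl erefl u'.
have E : forall a (x : 'I_d), s a = x -> forall w,
    upd u' a w = [ffun l => upd u x w (s l)].
  move=> a x sa w; apply/ffunP => l; rewrite !ffunE.
  by rewrite -sa (inj_eq perm_inj).
rewrite (E i0 i si0) (E i1 j si1) !HS !ffunE si0 si1.
done.
Qed.

Lemma cent_move2 i j u a b : i != j ->
  Th (upd (upd u i (psi a)) j b) = Th (upd (upd u i a) j (psi b)).
Proof.
move=> hij.
pose v := upd (upd u i a) j b.
have := @cent_move i j v hij.
have -> : v i = a by rewrite /v upd_neq // upd_eq.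
have -> : v j = b by rewrite /v upd_eq.
by rewrite /v upd_upd -upd_comm // upd_upd.
Qed.

Lemma L_elim (L : 'End(V)) v i : in_LTheta Th L ->
  Th (upd v i (L (v i))) = - \sum_(j | j != i) Th (upd v j (L (v j))).
Proof.
move=> /(_ v); rewrite (bigD1 i) //= => /eqP; rewrite addr_eq0 => /eqP.
done.
Qed.

Lemma Th_sub u i x y : Th (upd u i (x - y)) = Th (upd u i x) - Th (upd u i y).
Proof.
have -> : x - y = (-1) *: y + x by rewrite scaleN1r addrC.
by rewrite Hlin mulN1r addrC.
Qed.

Lemma closure f g : in_LTheta Th f -> in_LTheta Th g ->
  in_LTheta Th (psi_bracket psi f g).
Proof.
move=> Hf Hg u.
under eq_bigr => i _ do
  rewrite /psi_bracket add_lfunE opp_lfunE !comp_lfunE Th_sub.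
rewrite sumrB; apply/eqP; rewrite subr_eq0; apply/eqP.
pose F i j := Th (upd (upd u i (g (u i))) j (psi (f (u j)))).
transitivity (\sum_i - \sum_(j | j != i) F i j).
  apply: eq_bigr => i _.
  pose v := upd u i (psi (g (u i))).
  have -> : upd u i (f (psi (g (u i)))) = upd v i (f (v i)).
    by rewrite /v upd_upd upd_eq.
  rewrite (L_elim v i Hf); congr (- _); apply: eq_bigr => j ji.
  rewrite /v upd_neq // cent_move2 // eq_sym //.
transitivity (\sum_j - \sum_(i | i != j) F i j); last first.
  apply: eq_bigr => j _.
  pose v := upd u j (psi (f (u j))).
  have -> : upd u j (g (psi (f (u j)))) = upd v j (g (v j)).
    by rewrite /v upd_upd upd_eq.
  rewrite (L_elim v j Hg); congr (- _); apply: eq_bigr => i ij.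
  by rewrite /v upd_neq // /F upd_comm.
rewrite !sumrN; congr (- _).
rewrite (exchange_big_dep xpredT) //=.
by apply: eq_bigr => j _; apply: eq_bigl => i; rewrite eq_sym.
Qed.

End Aux.
Unset Implicit Arguments.

Theorem proposition2p15 (k : fieldType) (V : vectType k) (d : nat)
    (Th : {ffun 'I_d -> V} -> k) (psi : 'End(V)) :
  char_zero_or_gt k d ->
  (3 <= d)%N ->
  dlinear_form Th -> symmetric_dform Th -> regular_dform Th ->
  in_Cent Th psi ->
  (* closure *)
  (forall f g, in_LTheta Th f -> in_LTheta Th g -> in_LTheta Th (psi_bracket psi f g)) /\
  (* bilinearity *)
  (forall (a : k) f g h, in_LTheta Th f -> in_LTheta Th g -> in_LTheta Th h ->
     psi_bracket psi (a *: f + g) h = a *: psi_bracket psi f h + psi_bracket psi g h /\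
     psi_bracket psi h (a *: f + g) = a *: psi_bracket psi h f + psi_bracket psi h g) /\
  (* alternating *)
  (forall f, in_LTheta Th f -> psi_bracket psi f f = 0) /\
  (* Jacobi identity *)
  (forall f g h, in_LTheta Th f -> in_LTheta Th g -> in_LTheta Th h ->
     psi_bracket psi f (psi_bracket psi g h) + psi_bracket psi g (psi_bracket psi h f)
     + psi_bracket psi h (psi_bracket psi f g) = 0).
Proof.
move=> _ hd Hlin HS _ HC.
have hd1 : (1 < d)%N by apply: leq_trans hd.
split; first by move=> f g; apply: closure.
split.
  move=> a f g h _ _ _; rewrite /psi_bracket; split.
    rewrite !(comp_lfunDl, comp_lfunDr) -!(comp_lfunZl, comp_lfunZr).
    by rewrite scalerBr opprD addrACA.
  rewrite !(comp_lfunDl, comp_lfunDr) -!(comp_lfunZl, comp_lfunZr).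
  by rewrite scalerBr opprD addrACA.
split; first by move=> f _; rewrite /psi_bracket subrr.
move=> f g h _ _ _; rewrite /psi_bracket.
rewrite !(comp_lfunDr, comp_lfunDl, comp_lfunNr, comp_lfunNl, comp_lfunA).
exact: zJ.
Qed.
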